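(* Let $(\alpha,\beta)\in(0,\infty)^2$ with $\nabla I(\alpha,\beta)=0$. Then $I(\alpha,\beta)<\sqrt{\pi/2}$.
   Context: For $\alpha,\beta\ge 0$ define $I(\alpha,\beta)=\exp\left(-\frac{\alpha\beta}{2}\right)\int_{-\alpha}^{\beta}\exp\left(-\frac{\sigma^2}{2}\right)d\sigma$. *)

(* Defs.v *)
From Stdlib Require Import Reals.
From Coquelicot Require Import Coquelicot.
Open Scope R_scope.

Definition I (a b : R) : R :=
  exp (- (a * b) / 2) * RInt (fun s => exp (- (s ^ 2) / 2)) (- a) b.

(* Main.v *)
Require Import Defs.
From Stdlib Require Import Reals Lra Psatz.
From Coquelicot Require Import Coquelicot.
Open Scope R_scope.
Definition c := 122/100.
Definition g s p := s - s^3/6 + s^5/40 - c + p*(s/2 - s^3/8 - c/2) + p^2*s/8.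
Lemma g1 s : 0 < s -> s <= 164/100 -> g s 0 < 0.
Proof. intros. unfold g, c.
  assert (s^5/40 <= s^3 * ((164/100)^2/40)). { assert (s^2 <= (164/100)^2) by nra.
   assert (0 <= s^3) by (apply pow_le; lra). replace (s^5) with (s^3*s^2) by ring. nra. }
  assert (s - s^3 * (1/6 - (164/100)^2/40) <= 164/100 - (164/100)^3*(1/6 - (164/100)^2/40)).
  { assert (0 <= (164/100 - s)) by lra. 
    assert (s*s <= 164/100*164/100) by nra.
    assert (0 <= 164/100 * s) by nra.
    nra. }
  lra.
Qed.
Lemma g2 s : 164/100 <= s -> c*s*(1+(2*s/c-4/c^2)) <= 4 -> g s (2*s/c-4/c^2) < 0.
Proof. intros H1 H2. unfold g, c in *.
  assert (s <= 204/100) by nra.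
  set (t := s - 164/100). replace s with (t + 164/100) by (unfold t; ring).
  assert (0 <= t <= 2/5) by (unfold t; lra). clearbody t.
  assert (0 <= t^2) by nra. assert (0 <= t^3) by (apply pow_le; lra).
  assert (t^4 <= 2/5*t^3) by (replace (t^4) with (t^3*t) by ring; nra).
  assert (t^5 <= 4/25*t^3) by (replace (t^5) with (t^3*(t*t)) by ring; nra).
  nra.
Qed.
Lemma coefneg s q : 0 < s -> q <= s^2/2 -> s/2 - s^3/8 - c/2 + q*s/8 < 0.
Proof. intros. unfold c.
  assert (q*s <= s^3/2) by (replace (s^3) with (s^2*s) by ring; nra).
  assert (s/2 - s^3/16 < 61/100).
  { destruct (Rle_lt_dec s 4).
    - assert (0 <= (s - 8/5)^2*(s+16/5)) by (apply Rmult_le_pos; [apply pow2_ge_0 | lra]).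
      assert (s^3 - 768/100*s + 8192/1000 = (s - 8/5)^2*(s+16/5)) by field. lra.
    - assert (16*s <= s^3) by (replace (s^3) with (s*s*s) by ring; nra). lra. }
  lra.
Qed.
Lemma gdiff s p q : g s p - g s q = (p - q) * (s/2 - s^3/8 - c/2 + (p+q)*s/8).
Proof. unfold g. field. Qed.
Lemma fin a b : 0 < a -> 0 < b -> c*a*(1+b*(a+b)/2) <= 2 -> c*b*(1+a*(a+b)/2) <= 2 ->
  c*(1+a*b/2) <= (a - a^3/6 + a^5/40) + (b - b^3/6 + b^5/40) -> False.
Proof. intros ha hb HA HB HC.
  assert (HG : 0 <= g (a+b) (a*b)).
  { assert (g (a+b) (a*b) = (a - a^3/6 + a^5/40) + (b - b^3/6 + b^5/40) - c*(1+a*b/2)) by (unfold g; field). lra. }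
  assert (Hp : 4*(a*b) <= (a+b)^2) by (pose proof (pow2_ge_0 (a-b)); nra).
  assert (Hs : 0 < a+b) by lra.
  assert (Hpp : 0 < a*b) by (apply Rmult_lt_0_compat; lra).
  assert (HS : c*(a+b)*(1+a*b) <= 4).
  { assert (c*(a+b)*(1+a*b) = c*a*(1+b*(a+b)/2) + c*b*(1+a*(a+b)/2)) by field. lra. }
  set (s := a+b) in *. set (p := a*b) in *.
  destruct (Rle_lt_dec s (164/100)) as [h|h].
  - pose proof (g1 s Hs h). pose proof (gdiff s p 0).
    pose proof (coefneg s (p+0) Hs ltac:(lra)). nra.
  - assert (Ha' : c*a <= 2). { assert (0 <= a*(b*s)) by (unfold s; nra). unfold c in *. nra. }
    assert (Hb' : c*b <= 2). { assert (0 <= b*(a*s)) by (unfold s; nra). unfold c in *. nra. }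
    assert (Hk : 2*s/c - 4/c^2 <= p).
    { assert (0 <= (2/c - a)*(2/c-b)). { apply Rmult_le_pos; unfold c in *; lra. }
      unfold s, p, c in *. nra. }
    assert (HS2 : c*s*(1+(2*s/c-4/c^2)) <= 4).
    { assert (0 < c*s) by (unfold c; lra). nra. }
    pose proof (g2 s ltac:(lra) HS2).
    pose proof (gdiff s p (2*s/c-4/c^2)).
    pose proof (coefneg s (p+(2*s/c-4/c^2)) Hs ltac:(lra)). nra.
Qed.
Definition phi (s : R) := exp (- (s ^ 2) / 2).
Lemma phi_der x : is_derive phi x (- x * phi x).
Proof. unfold phi. auto_derive; [easy|]. replace (- (x * (x * 1)) * / 2) with (- x ^ 2 / 2) by field. field. Qed.
Lemma phi_cont x : continuous phi x.
Proof. apply (@ex_derive_continuous R_AbsRing R_NormedModule). eexists. apply phi_der. Qed.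
Lemma phi_int u v : ex_RInt phi u v.
Proof. apply (@ex_RInt_continuous R_CompleteNormedModule). intros; apply phi_cont. Qed.
Lemma phi_even x : phi (-x) = phi x.
Proof. unfold phi. replace ((-x)^2) with (x^2) by ring. reflexivity. Qed.

Lemma derb a b : is_derive (fun y => I a y) b
  (exp (-(a*b)/2) * (-a/2) * RInt phi (-a) b + exp (-(a*b)/2) * phi b).
Proof.
  apply is_derive_ext with (f := fun y => exp (-(a*y)/2) * RInt phi (-a) y).
  { intros; reflexivity. }
  assert (H1 : is_derive (fun y => exp (-(a*y)/2)) b (exp (-(a*b)/2) * (-a/2))).
  { auto_derive; [easy|]. replace (- (a * b) * / 2) with (- (a * b) / 2) by field. field. }
  assert (H2 : is_derive (RInt phi (-a)) b (phi b)).
  { apply (@is_derive_RInt R_NormedModule phi (RInt phi (-a)) (-a) b).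
    - apply filter_forall. intros. apply (@RInt_correct R_CompleteNormedModule). apply phi_int.
    - apply phi_cont. }
  pose proof (is_derive_mult _ _ b _ _ H1 H2 Rmult_comm) as H.
  exact H.
Qed.

Lemma dera a b : is_derive (fun x => I x b) a
  (exp (-(a*b)/2) * (-b/2) * RInt phi (-a) b + exp (-(a*b)/2) * phi a).
Proof.
  apply is_derive_ext with (f := fun x => exp (-(x*b)/2) * RInt phi (-x) b).
  { intros; reflexivity. }
  assert (H1 : is_derive (fun x => exp (-(x*b)/2)) a (exp (-(a*b)/2) * (-b/2))).
  { auto_derive; [easy|]. replace (- (a * b) * / 2) with (- (a * b) / 2) by field. field. }
  assert (H0 : is_derive (fun u => RInt phi u b) (-a) (opp (phi (-a)))).
  { apply (@is_derive_RInt' R_NormedModule phi (fun u => RInt phi u b) (-a) b).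
    - apply filter_forall. intros. apply (@RInt_correct R_CompleteNormedModule). apply phi_int.
    - apply phi_cont. }
  assert (Hn : is_derive (fun x : R => -x) a (-1)).
  { auto_derive; [easy|ring]. }
  pose proof (is_derive_comp (fun u => RInt phi u b) (fun x => -x) a _ _ H0 Hn) as H2.
  assert (H3 : is_derive (fun x => RInt phi (-x) b) a (phi a)).
  { replace (phi a) with (scal (-1) (opp (phi (-a)))). exact H2.
    rewrite phi_even. unfold scal, opp; simpl. unfold mult; simpl. ring. }
  pose proof (is_derive_mult _ _ a _ _ H1 H3 Rmult_comm) as H.
  exact H.
Qed.

Lemma exp_taylor x : 0 <= x -> exp (-x) <= 1 - x + x^2/2.
Proof. intros hx.
  set (f := fun y => exp (-y) - (1 - y + y^2/2)).
  assert (Hd : forall y, is_derive f y (- exp (-y) + 1 - y)).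
  { intros y. unfold f. auto_derive; [easy | field]. }
  destruct (Req_dec x 0) as [->|hx0].
  { rewrite Ropp_0, exp_0. lra. }
  destruct (MVT_gen f 0 x (fun y => - exp (-y) + 1 - y)) as [c [hc e]].
  { intros; apply Hd. }
  { intros. apply continuity_pt_filterlim. apply (@ex_derive_continuous R_AbsRing R_NormedModule). eexists; apply Hd. }
  rewrite Rmin_left in hc by lra. rewrite Rmax_right in hc by lra.
  pose proof (exp_ineq1_le (-c)).
  assert (f x - f 0 <= 0) by (rewrite e; nra).
  unfold f in *. rewrite Ropp_0, exp_0 in *. lra.
Qed.

Definition P (t : R) := t - t^3/6 + t^5/40.
Lemma F_le a b : 0 <= a -> 0 <= b -> RInt phi (-a) b <= P a + P b.
Proof. intros ha hb.
  assert (HR : is_RInt (fun t => 1 - t^2/2 + t^4/8) (-a) b (minus (P b) (P (-a)))).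
  { apply (@is_RInt_derive R_CompleteNormedModule).
    - intros. unfold P. auto_derive; [easy|field].
    - intros. apply (@ex_derive_continuous R_AbsRing R_NormedModule). auto_derive. easy. }
  apply (@is_RInt_unique R_CompleteNormedModule) in HR.
  assert (P a + P b = minus (P b) (P (-a))) as ->.
  { unfold minus, plus, opp; simpl. unfold P. field. }
  rewrite <- HR.
  apply RInt_le.
  - lra.
  - apply phi_int.
  - apply (@ex_RInt_continuous R_CompleteNormedModule). intros. apply (@ex_derive_continuous R_AbsRing R_NormedModule). auto_derive. easy.
  - intros t _. unfold phi.
    assert (- t^2/2 = - (t^2/2)) as -> by field.
    pose proof (exp_taylor (t^2/2) ltac:(nra)). nra.
Qed.

Lemma expX X : 0 <= X -> exp (-X) * (1 + X) <= 1.
Proof. intros. pose proof (exp_ineq1_le X). pose proof (exp_pos (-X)).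
  assert (exp (-X) * exp X = 1) by (rewrite <- exp_plus; replace (-X+X) with 0 by ring; apply exp_0).
  nra. Qed.

Theorem lemma3p5 (a b : R) (ha : 0 < a) (hb : 0 < b)
  (hda : is_derive (fun x => I x b) a 0)
  (hdb : is_derive (fun y => I a y) b 0) :
  I a b < sqrt (PI / 2).
Proof.
  assert (Ea := is_derive_unique _ _ _ hda).
  rewrite (is_derive_unique _ _ _ (dera a b)) in Ea.
  assert (Eb := is_derive_unique _ _ _ hdb).
  rewrite (is_derive_unique _ _ _ (derb a b)) in Eb.
  change (I a b) with (exp (-(a*b)/2) * RInt phi (-a) b).
  pose proof (F_le a b ltac:(lra) ltac:(lra)) as HF. unfold P in HF.
  assert (exists F : R, RInt phi (-a) b = F) as [F HF0] by eauto.
  rewrite HF0 in Ea, Eb, HF |- *.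
  set (E := exp (-(a*b)/2)) in *.
  assert (HE : 0 < E) by apply exp_pos.
  assert (E1 : phi b = a/2 * F).
  { apply (Rmult_eq_reg_l E); [|lra]. lra. }
  assert (E2 : phi a = b/2 * F).
  { apply (Rmult_eq_reg_l E); [|lra]. lra. }
  apply Rnot_le_lt. intro Hge.
  set (Iv := E * F) in *.
  assert (Hs0 : 0 <= sqrt (PI/2)) by apply sqrt_pos.
  assert (Hsq : sqrt (PI/2) * sqrt (PI/2) = PI/2) by (apply sqrt_sqrt; pose proof PI2_RGT_0; lra).
  pose proof PI2_3_2.
  assert (HI : c <= Iv) by (unfold c; nra).
  assert (HFe : F = Iv * exp (a*b/2)).
  { unfold Iv, E. replace (exp (-(a*b)/2) * F * exp (a*b/2)) with ((exp (-(a*b)/2) * exp (a*b/2)) * F) by ring.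
    rewrite <- exp_plus. replace (-(a*b)/2 + a*b/2) with 0 by field.
    rewrite exp_0. ring. }
  apply (fin a b ha hb).
  -
    assert (a * Iv = 2 * exp (- (b*(a+b)/2))).
    { unfold Iv, E. replace (a * (exp (-(a*b)/2) * F)) with (2 * exp (-(a*b)/2) * (a/2*F)) by field.
      rewrite <- E1. unfold phi. rewrite Rmult_assoc, <- exp_plus. f_equal. f_equal. field. }
    pose proof (expX (b*(a+b)/2) ltac:(nra)).
    assert (0 <= 1 + b*(a+b)/2) by nra.
    assert (c*a*(1+b*(a+b)/2) <= a*Iv*(1+b*(a+b)/2)).
    { apply Rmult_le_compat_r; [lra|]. nra. }
    nra.
  - assert (b * Iv = 2 * exp (- (a*(a+b)/2))).
    { unfold Iv, E. replace (b * (exp (-(a*b)/2) * F)) with (2 * exp (-(a*b)/2) * (b/2*F)) by field.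
      rewrite <- E2. unfold phi. rewrite Rmult_assoc, <- exp_plus. f_equal. f_equal. field. }
    pose proof (expX (a*(a+b)/2) ltac:(nra)).
    assert (0 <= 1 + a*(a+b)/2) by nra.
    assert (c*b*(1+a*(a+b)/2) <= b*Iv*(1+a*(a+b)/2)).
    { apply Rmult_le_compat_r; [lra|]. nra. }
    nra.
  -     pose proof (exp_ineq1_le (a*b/2)).
    assert (0 < a*b) by nra.
    assert (c*(1+a*b/2) <= Iv * exp (a*b/2)).
    { apply Rmult_le_compat; unfold c in *; lra. }
    lra.
Qed.
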